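(* Let $n\ge1$ and $\rho\in S_{n+1}$. Then $\ell_L(\rho)=\ell_L(s_1\rho)$.
   Context: $B_m$ is the group of bijections $\sigma$ of $\{\pm1,\dots,\pm m\}$ with $\sigma(-i)=-\sigma(i)$, written in window notation $[\sigma(1),\dots,\sigma(m)]$, with product $(\sigma\tau)(i)=\sigma(\tau(i))$; $S_m\subseteq B_m$ consists of elements with all $\sigma(i)>0$. The Coxeter generators of $B_m$ are $s_0=[-1,2,\dots,m]$ and $s_i=$ the transposition of $i$ and $i+1$ ($1\le i\le m-1$); $\ell_B(\sigma)$ is the length with respect to $\{s_0,\dots,s_{m-1}\}$. $\mathrm{del}_B(\sigma)=\#\{2\le j\le m:\sigma(i)>\sigma(j)\text{ for all }1\le i<j\}$, and $\ell_L(\sigma)=\ell_B(\sigma)-\mathrm{del}_B(\sigma)$. *)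

(* Defs.v *)
From mathcomp Require Import all_boot all_order all_algebra.
From Stdlib Require Import ClassicalEpsilon.
Set Implicit Arguments. Unset Strict Implicit. Unset Printing Implicit Defensive.
Import Order.TTheory GRing.Theory Num.Theory.
Local Open Scope ring_scope.

(* A window [σ(1),…,σ(m)] is a list of integers. *)
Definition window := seq int.

(* w is the window of an element of B_m: |σ(1)|,…,|σ(m)| is a permutation of 1..m *)
Definition inB (m : nat) (w : window) : bool :=
  (size w == m)%N && perm_eq [seq `|x|%N | x <- w] (iota 1 m).

Definition inS (m : nat) (w : window) : bool :=
  inB m w && all (fun x => 0 < x) w.

(* σ(k) for k ∈ {±1,…,±m}, using σ(-i) = -σ(i) *)
Definition sapply (w : window) (k : int) : int :=
  if 0 <= k then nth 0 w (`|k|.-1)%N else - nth 0 w (`|k|.-1)%N.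

Definition smul (s t : window) : window := [seq sapply s x | x <- t].

Definition sid (m : nat) : window := [seq (j%:Z) | j <- iota 1 m].

Definition sgen (m i : nat) : window :=
  if i == 0%N then [seq (if j == 1%N then -1 else j%:Z) | j <- iota 1 m]
  else [seq (if j == i then (i.+1)%:Z else if j == i.+1 then i%:Z else j%:Z)
        | j <- iota 1 m].

Definition word_prod (m : nat) (s : seq 'I_m) : window :=
  foldr (fun (i : 'I_m) acc => smul (sgen m i) acc) (sid m) s.

Definition has_word_len (m : nat) (w : window) : pred nat :=
  fun k => [exists t : k.-tuple 'I_m, @word_prod m (val t) == w].

(* Coxeter length ℓ_B: least k such that σ is a product of k generators
   (0 by convention if no such word exists, which never happens on B_m). *)
Definition lengthB (m : nat) (w : window) : nat :=
  match excluded_middle_informative (exists k, has_word_len m w k) with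
  | left H => ex_minn H
  | right _ => 0%N
  end.

Definition delB (m : nat) (w : window) : nat :=
  count (fun j => all (fun i => sapply w j%:Z < sapply w i%:Z) (iota 1 j.-1))
        (iota 2 m.-1).

Definition lengthL (m : nat) (w : window) : int :=
  (lengthB m w)%:Z - (delB m w)%:Z.

(* Main.v *)
Require Import Defs.
From mathcomp Require Import all_boot all_order all_algebra.
From mathcomp Require Import zify ring lra.
From Stdlib Require Import ClassicalEpsilon.
Set Implicit Arguments. Unset Strict Implicit. Unset Printing Implicit Defensive.
Import Order.TTheory GRing.Theory Num.Theory.

Section H.
Local Open Scope ring_scope.

Definition G (i j : nat) : int :=
  if i == 0%N then (if j == 1%N then -1 else j%:Z)
  else (if j == i then (i.+1)%:Z else if j == i.+1 then i%:Z else j%:Z).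

Definition gf (i : nat) (x : int) : int :=
  match x with Posz n => G i n | Negz n => - G i n.+1 end.

Lemma nth_sgen m i j : (1 <= j <= m)%N -> nth 0 (sgen m i) j.-1 = G i j.
Proof.
move=> /andP[h1 h2]; rewrite /sgen /G.
have hj : (j.-1 < size (iota 1 m))%N by rewrite size_iota; lia.
case: eqP => _; rewrite (nth_map 0%N) // nth_iota; try lia;
  rewrite add1n prednK //.
Qed.

Definition rng m (x : int) : bool := (0 < `|x| <= m)%N.

Lemma sapply_sgen m i x : rng m x -> sapply (sgen m i) x = gf i x.
Proof.
case: x => n; rewrite /rng /sapply /=.
  by move=> h; rewrite nth_sgen.
move=> h; rewrite -[n]/(n.+1.-1) nth_sgen //.
Qed.

Definition T (i n : nat) : nat :=
  if i == 0%N then n else if n == i then i.+1 else if n == i.+1 then i else n.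

Lemma abs_gf i x : `|gf i x|%N = T i `|x|%N.
Proof.
rewrite /T; case: x => n /=; rewrite /G; case: ifP => _; rewrite ?abszN;
by repeat case: eqP => //= ?; subst.
Qed.

Definition pp (x y : int) : int := (if y < x then 1 else 0) + (if x + y < 0 then 1 else 0).
Definition dd (x : int) : int := if x < 0 then 1 else 0.

Fixpoint Lsum (g : int -> int -> int) (h : int -> int) (w : seq int) : int :=
  match w with [::] => 0 | x :: s => h x + \sum_(y <- s) g x y + Lsum g h s end.

Definition Lb := Lsum pp dd.

Lemma Lsum_map g h f w :
  Lsum g h (map f w) = Lsum (fun x y => g (f x) (f y)) (fun x => h (f x)) w.
Proof. by elim: w => //= x s ->; rewrite big_map. Qed.

Lemma Lsum_sub g1 h1 g2 h2 w :
  Lsum g1 h1 w - Lsum g2 h2 w = Lsum (fun x y => g1 x y - g2 x y) (fun x => h1 x - h2 x) w.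
Proof.
elim: w => [|x s IH] /=; first by rewrite subr0.
rewrite -IH sumrB; ring.
Qed.

Lemma Lsum_filter (R Q : pred int) g h w :
  (forall x y, R x -> R y -> ~~ (Q x && Q y) -> g x y = 0) ->
  (forall x, R x -> ~~ Q x -> h x = 0) -> all R w ->
  Lsum g h w = Lsum g h (filter Q w).
Proof.
move=> Hg Hh; elim: w => //= x s IH /andP[Rx Rs].
case: ifP => Qx /=; rewrite IH //.
  rewrite big_filter /=; congr (_ + _ + _).
  rewrite [in RHS]big_mkcond; apply: eq_big_seq => y ys; case: ifP => // Qy; apply: Hg => //.
  - by move/allP: Rs; apply.
  - by rewrite Qy andbF.
rewrite Hh ?Qx // big1_seq ?add0r ?addr0 // => y /andP[_ ys].
by apply: Hg; rewrite ?Qx //; move/allP: Rs; apply.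
Qed.

Lemma Lsum_ge0 g h w : (forall x y, 0 <= g x y) -> (forall x, 0 <= h x) -> 0 <= Lsum g h w.
Proof.
move=> Hg Hh; elim: w => //= x s IH.
by rewrite !addr_ge0 // sumr_ge0.
Qed.

Lemma Lb_ge0 w : 0 <= Lb w.
Proof. apply: Lsum_ge0 => *; rewrite /pp /dd; repeat case: ifP => _; done. Qed.

Ltac brute := repeat (case: ifPn => /=); intros; try lia.

Lemma gfE i x : gf i x = if 0 <= x then G i `|x| else - G i `|x|.
Proof. by case: x. Qed.

Lemma gfN i x : gf i (- x) = - gf i x.
Proof. by case: x => [[|n]|n] //=; rewrite ?opprK //= /G; brute. Qed.

Lemma gf_inv i x : gf i (gf i x) = x.
Proof.
case: x => n; rewrite ?NegzE ?gfN /= /G; brute; rewrite ?gfN /= /G; brute.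
Qed.

Lemma smul_gen m i w : all (rng m) w -> smul (sgen m i) w = map (gf i) w.
Proof. by move=> /allP h; apply/eq_in_map => x /h; apply: sapply_sgen. Qed.

Definition Inv m (w : seq int) := all (rng m) w && uniq (map absz w).

Lemma T_inv i : involutive (T i).
Proof. move=> n; rewrite /T; brute. Qed.

Lemma Inv_gen m i w : (i < m)%N -> Inv m w -> Inv m (map (gf i) w).
Proof.
move=> im /andP[hr hu]; apply/andP; split.
  rewrite all_map; apply/allP => x /(allP hr); rewrite /rng /= abs_gf /T; brute.
rewrite -map_comp (eq_map (g := T i \o absz)) ?map_comp.
  by rewrite map_inj_uniq // ; apply: (can_inj (T_inv i)).
by move=> x /=; rewrite abs_gf.
Qed.

Lemma Inv_word m (t : seq 'I_m) : Inv m (@word_prod m t).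
Proof.
elim: t => [|i t IH] /=.
  rewrite /Inv /sid all_map -map_comp; apply/andP; split.
    by apply/allP => j; rewrite mem_iota /rng /=; lia.
  by rewrite (eq_map (g := id)) // map_id iota_uniq.
rewrite smul_gen; last by case/andP: IH.
exact: Inv_gen.
Qed.

Lemma filt_size (Q : pred int) (S : seq nat) w : uniq (map absz w) ->
  (forall x, Q x -> (`|x|%N \in S)) -> (size (filter Q w) <= size S)%N.
Proof.
move=> hu hQ; rewrite -(size_map absz); apply: uniq_leq_size.
  apply: subseq_uniq hu; apply: map_subseq; exact: filter_subseq.
by move=> n /mapP[x]; rewrite mem_filter => /andP[/hQ h _] ->.
Qed.

Ltac brute1 x := case: x => ?; rewrite ?NegzE ?gfN ?abszN /= /pp /dd /G; brute.
Ltac brute2 x y := case: x => ?; case: y => ?; rewrite ?NegzE ?gfN ?abszN /= /pp /dd /G; brute.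

Lemma abs_cases (a : int) n : `|a|%N = n -> a = Posz n \/ a = - Posz n.
Proof. case: a => k /= <-; [by left | by right; rewrite NegzE]. Qed.

Lemma gf_i i : (1 <= i)%N -> gf i (Posz i) = Posz i.+1.
Proof. by move=> h; rewrite /= /G eqxx; case: eqP => //; lia. Qed.

Lemma gf_i1 i : (1 <= i)%N -> gf i (Posz i.+1) = Posz i.
Proof. by move=> h; rewrite /= /G eqxx; case: eqP => //; case: eqP => //; lia. Qed.

Lemma G_i i : (1 <= i)%N -> G i i = Posz i.+1.
Proof. exact: gf_i. Qed.
Lemma G_i1 i : (1 <= i)%N -> G i i.+1 = Posz i.
Proof. exact: gf_i1. Qed.

Lemma dd_gf i x : (1 <= i)%N -> dd (gf i x) = dd x.
Proof. move=> h; brute1 x. Qed.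

Lemma Lb_gen m i w : (i < m)%N -> Inv m w -> Lb (map (gf i) w) <= Lb w + 1.
Proof.
move=> im hI; rewrite -lerBlDl.
have -> : Lb (map (gf i) w) - Lb w =
   Lsum (fun x y => pp (gf i x) (gf i y) - pp x y) (fun x => dd (gf i x) - dd x) w.
  by rewrite /Lb Lsum_map Lsum_sub.
case/andP: hI => hr hu.
have hR : all (fun x : int => x != 0) w.
  by apply/allP => x /(allP hr); rewrite /rng; case: x => [[|n]|n].
case: (i =P 0%N) => [i0|inz].
  subst i.
  rewrite (@Lsum_filter (fun x => x != 0) (fun x => `|x|%N == 1%N)) //; first last.
  - move=> x; brute1 x.
  - move=> x y; brute2 x y.
  have hQ : forall x : int, `|x|%N == 1%N -> `|x|%N \in [:: 1%N].
    by move=> x /eqP ->; rewrite inE.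
  have := filt_size hu hQ.
  case: (filter _ w) => [|a [|b s]] //=.
  by move=> _; rewrite big_nil; brute1 a.
have i1 : (1 <= i)%N by case: i inz im => [|].
rewrite (@Lsum_filter (fun x => x != 0) (fun x => (`|x|%N == i) || (`|x|%N == i.+1))) //; first last.
- move=> x; brute1 x.
- move=> x y; brute2 x y.
have hQ : forall x : int, (`|x|%N == i) || (`|x|%N == i.+1) -> `|x|%N \in [:: i; i.+1].
  by move=> x; rewrite !inE.
have := filt_size hu hQ.
have := filter_subseq (fun x => (`|x|%N == i) || (`|x|%N == i.+1)) w.
have := mem_filter (fun x => (`|x|%N == i) || (`|x|%N == i.+1)) ^~ w.
case: (filter _ w) => [|a [|b [|c s]]] //=.
- by move=> _ _ _; rewrite big_nil; brute1 a.
move=> hm hs _; rewrite big_cons big_nil.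
have := subseq_uniq (map_subseq absz hs) hu => /=; rewrite inE andbT.
have := hm a; have := hm b; rewrite !inE !eqxx ?orbT /=.
move=> /esym/andP[Qb _] /esym/andP[Qa _] nab; clear hm hs.
rewrite big_nil !(dd_gf _ i1) ?subrr ?add0r ?addr0.
move: Qa Qb nab; case/orP => /eqP /abs_cases [] -> ;
  case/orP => /eqP /abs_cases [] -> //=; rewrite ?gfN ?gf_i ?gf_i1 //= ?G_i ?G_i1 //;
  rewrite /pp; brute.
Qed.

Lemma Lb_iota a n : Lb (map Posz (iota a n)) = 0.
Proof.
elim: n a => [|n IH] a /=; first by []. rewrite /Lb /= -/Lb IH addr0 /dd /=.
rewrite big_map big1_seq ?addr0 // => y; rewrite mem_iota /pp => /andP[_ h].
brute.
Qed.

Lemma Lb_sid m : Lb (sid m) = 0.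
Proof. exact: Lb_iota. Qed.

Lemma Lb_word m (t : seq 'I_m) : Lb (@word_prod m t) <= (size t)%:Z.
Proof.
elim: t => [|i t IH] /=; first by rewrite Lb_sid.
have hI := Inv_word t.
rewrite smul_gen; last by case/andP: hI.
apply: le_trans (Lb_gen (ltn_ord i) hI) _.
rewrite -addn1 PoszD lerD2r //.
Qed.

Lemma chain (idx : nat -> nat) d v : (idx (v + d.+1) < idx v)%N ->
  exists k, [/\ (v <= k)%N, (k < v + d.+1)%N & (idx k.+1 < idx k)%N].
Proof.
elim: d v => [|d IH] v h.
  by exists v; rewrite addn1 in h; split => //; lia.
case: (ltnP (idx v.+1) (idx v)) => h2.
  by exists v; split => //; lia.
have h3 : (idx (v.+1 + d.+1) < idx v.+1)%N.
  rewrite addSnnS; apply: leq_trans h2; exact: h.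
have [k [h4 h5 h6]] := IH _ h3.
exists k; split => //; lia.
Qed.

Lemma filter_one (T0 : eqType) (Q : pred T0) (s : seq T0) y :
  uniq s -> y \in s -> Q y -> (forall z, z \in s -> Q z -> z = y) -> filter Q s = [:: y].
Proof.
elim: s => // z r IH /= /andP[zr ur]; rewrite inE => yin Qy hz.
case: (z =P y) => [e|ne].
  subst z; rewrite Qy; congr cons.
  have : all (fun z => ~~ Q z) r.
    apply/allP => z zin; apply/negP => Qz.
    by move: zr; rewrite -(hz z) ?zin // inE zin orbT.
  clear IH zr ur hz yin; by elim: r => //= a r' IH' /andP[/negbTE -> /IH'].
have Qz : Q z = false.
  by apply/negP => Qz; apply: ne; apply: hz => //; rewrite inE eqxx.
rewrite Qz; apply: IH => //.
  by case/orP: yin => // /eqP e; case: ne.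
by move=> x xr Qx; apply: hz => //; rewrite inE xr orbT.
Qed.

Lemma filter_two (T0 : eqType) (Q : pred T0) (s : seq T0) x y :
  uniq s -> x \in s -> y \in s -> x != y -> Q x -> Q y ->
  (forall z, z \in s -> Q z -> z = x \/ z = y) -> (index x s < index y s)%N ->
  filter Q s = [:: x; y].
Proof.
elim: s => // z r IH /= /andP[zr ur]; rewrite !inE => xin yin nxy Qx Qy hz.
case: (z =P x) => [e|nx].
  subst z; rewrite Qx => _; congr cons; apply: filter_one => //.
    by case/orP: yin => [/eqP e|//]; rewrite e eqxx in nxy.
  move=> z0 z0r Qz; case: (hz z0 _ Qz) => //; first by rewrite inE z0r orbT.
  by move=> e; subst z0; rewrite z0r in zr.
case: (z =P y) => [e|ny].
  by subst z.
have Qz : Q z = false.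
  apply/negP => Qz; case: (hz z _ Qz) => //; by rewrite inE eqxx.
rewrite Qz ltnS => h; apply: IH => //.
- by case/orP: xin => [/eqP e|//]; case: nx.
- by case/orP: yin => [/eqP e|//]; case: ny.
- move=> w wr Qw; apply: hz => //; by rewrite inE wr orbT.
Qed.

Definition PS m (w : seq int) := [&& Inv m w, all (fun x => 0 < x) w & size w == m].

Lemma pos_abs w : all (fun x => 0 < x) w -> map Posz (map absz w) = w.
Proof. by elim: w => //= x s IH /andP[hx /IH ->]; case: x hx. Qed.

Lemma PS_abs_eq m w : PS m w -> map absz w =i iota 1 m.
Proof.
case/and3P => /andP[hr hu] _ /eqP hs.
have := @uniq_min_size _ (map absz w) (iota 1 m) hu.
case.
- move=> n /mapP[x /(allP hr)]; rewrite /rng mem_iota => h ->; lia.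
- by rewrite size_iota size_map hs.
- by [].
Qed.

Lemma PS_mem m w k : PS m w -> (1 <= k <= m)%N -> Posz k \in w.
Proof.
move=> hP hk; have := PS_abs_eq hP k; rewrite mem_iota.
have -> : (1 <= k < 1 + m)%N by lia.
case/and3P: hP => _ hpos _.
by move/mapP => [x xw ->]; move/allP: hpos => /(_ x xw); case: x xw.
Qed.

Lemma PS_uniq m w : PS m w -> uniq w.
Proof. by case/and3P => /andP[_ hu] _ _; move: hu; apply: map_uniq. Qed.

Lemma PS_sid m w : PS m w -> sorted leq (map absz w) -> w = sid m.
Proof.
move=> hP hs; have hp := hP; case/and3P: hp => /andP[hr hu] hpos _.
rewrite -(pos_abs hpos) /sid; congr map.
apply: (sorted_eq leq_trans anti_leq hs (iota_sorted 1 m)).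
by apply: uniq_perm => //; [exact: iota_uniq | exact: PS_abs_eq hP].
Qed.

Lemma PS_gen m w k : PS m w -> (1 <= k < m)%N -> PS m (map (gf k) w).
Proof.
case/and3P => hI hpos hs hk; apply/and3P; split.
- by apply: Inv_gen => //; lia.
- rewrite all_map; apply/allP => x /(allP hpos); case: x => // n /= hn.
  rewrite /G; brute.
- by rewrite size_map.
Qed.

Lemma descent m w : PS m w -> w != sid m ->
  exists k, (1 <= k < m)%N /\ (index (Posz k.+1) w < index (Posz k) w)%N.
Proof.
move=> hP hne; have hp := hP; case/and3P: hp => /andP[hr hu] hpos /eqP hs.
set s := map absz w.
have hws : w = map Posz s by rewrite pos_abs.
have hsz : size s = m by rewrite size_map.
case Hh: (has (fun a => nth 0%N s a.+1 < nth 0%N s a)%N (iota 0 m.-1)).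
  case/hasP: Hh => a; rewrite mem_iota add0n => ha hlt.
  have hrs : forall j, (j < m)%N -> (1 <= nth 0%N s j <= m)%N.
    move=> j hj; have hj' : (j < size s)%N by rewrite hsz.
    have := mem_nth 0%N hj'.
    by rewrite (PS_abs_eq hP) mem_iota add1n ltnS.
  have hu' := PS_uniq hP.
  have idxa : forall j, (j < m)%N -> index (Posz (nth 0%N s j)) w = j.
    move=> j hj; rewrite -(nth_map 0%N 0 Posz) ?hsz // -hws.
    by apply: index_uniq; rewrite // hs.
  set u := nth 0%N s a; set v := nth 0%N s a.+1.
  have hu1 := hrs a (ltn_trans (ltnSn a) (_ : a.+1 < m)%N).
  have hv1 := hrs a.+1 (_ : a.+1 < m)%N.
  have e : u = (v + (u - v - 1).+1)%N by lia.
  have := @chain (fun k => index (Posz k) w) (u - v - 1) v.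
  rewrite -e idxa ?idxa; try lia.
  move=> /(_ (ltnSn a)) [k [h1 h2 h3]].
  exists k; split => //; lia.
exfalso; move/negP: hne; apply; apply/eqP; apply: (PS_sid hP).
apply/(sortedP 0%N) => a ha; move/hasPn: Hh => /(_ a).
rewrite mem_iota; rewrite hsz in ha => /(_ _) h; rewrite leqNgt; apply: h; lia.
Qed.

Definition Qk (k : nat) (x : int) := (`|x|%N == k) || (`|x|%N == k.+1).

Lemma Lb_diff k w : (1 <= k)%N -> all (fun x : int => x != 0) w ->
  Lb (map (gf k) w) - Lb w =
  Lsum (fun x y => pp (gf k x) (gf k y) - pp x y) (fun x => dd (gf k x) - dd x) (filter (Qk k) w).
Proof.
move=> i1 hR; rewrite /Lb Lsum_map Lsum_sub.
rewrite (@Lsum_filter (fun x => x != 0) (Qk k)) // /Qk.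
- move=> x y; brute2 x y.
- move=> x; brute1 x.
Qed.

Lemma PS_filter m w k : PS m w -> (1 <= k < m)%N -> (index (Posz k) w < index (Posz k.+1) w)%N ->
  filter (Qk k) w = [:: Posz k; Posz k.+1].
Proof.
move=> hP hk hi; apply: filter_two => //.
- exact: PS_uniq hP.
- by apply: PS_mem hP _; lia.
- by apply: PS_mem hP _; lia.
- by apply/eqP => -[]; lia.
- by rewrite /Qk eqxx.
- by rewrite /Qk eqxx orbT.
move=> z zw; case/and3P: hP => _ /allP /(_ z zw) hz _.
by case: z hz zw => // n _ _ /orP[] /eqP /= ->; [left|right].
Qed.

Lemma PS_nz m w : PS m w -> all (fun x : int => x != 0) w.
Proof. by case/and3P => _ /allP h _; apply/allP => x /h; case: x => [[|n]|n]. Qed.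

Lemma Lb_up m w k : PS m w -> (1 <= k < m)%N -> (index (Posz k) w < index (Posz k.+1) w)%N ->
  Lb (map (gf k) w) = Lb w + 1.
Proof.
move=> hP hk hi.
have h : Lb (map (gf k) w) - Lb w = 1.
  rewrite (Lb_diff _ (PS_nz hP)); last by lia.
  rewrite (PS_filter hP hk hi) /= !big_cons !big_nil /= ?G_i ?G_i1; try lia.
  rewrite /pp /dd; brute.
by rewrite -h; ring.
Qed.

Lemma Lb_down m w k : PS m w -> (1 <= k < m)%N -> (index (Posz k.+1) w < index (Posz k) w)%N ->
  Lb (map (gf k) w) = Lb w - 1.
Proof.
move=> hP hk hi.
have hP' := PS_gen hP hk.
have hi' : (index (Posz k) (map (gf k) w) < index (Posz k.+1) (map (gf k) w))%N.
  have inj : injective (gf k) by apply: (can_inj (gf_inv k)).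
  have i1 : (1 <= k)%N by lia.
  have := index_map inj w (Posz k.+1); rewrite gf_i1 // => ->.
  by have := index_map inj w (Posz k); rewrite gf_i // => ->.
have := Lb_up hP' hk hi'; rewrite -map_comp (eq_map (g := id)) ?map_id.
  by move=> ->; ring.
exact: gf_inv.
Qed.

Lemma Lb_pos w : Lb w = Posz `|Lb w|%N.
Proof. by have := Lb_ge0 w; case: (Lb w). Qed.

Lemma word_exists m n : forall w, PS m w -> `|Lb w|%N = n -> has_word_len m w n.
Proof.
elim: n => [|n IH] w hP hn.
  case: (w =P sid m) => [->|ne].
    by apply/existsP; exists [tuple].
  have [k [hk hi]] := descent hP (introN eqP ne).
  have := Lb_ge0 (map (gf k) w); rewrite (Lb_down hP hk hi) Lb_pos hn; lia.
case: (w =P sid m) => [e|ne].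
  by move: hn; rewrite e Lb_sid.
have [k [hk hi]] := descent hP (introN eqP ne).
have hP' := PS_gen hP hk.
have hn' : `|Lb (map (gf k) w)|%N = n.
  have h := Lb_down hP hk hi; have h2 := Lb_pos (map (gf k) w); have h3 := Lb_pos w; rewrite hn in h3; lia.
have /existsP [t /eqP ht] := IH _ hP' hn'.
have km : (k < m)%N by lia.
apply/existsP; exists [tuple of Ordinal km :: t]; apply/eqP => /=.
rewrite ht smul_gen; last by case/and3P: hP' => /andP[].
by rewrite -map_comp (eq_map (g := id)) ?map_id //; exact: gf_inv.
Qed.

Lemma lengthB_PS m w : PS m w -> lengthB m w = `|Lb w|%N.
Proof.
move=> hP; rewrite /lengthB; case: excluded_middle_informative => [H|H].
  case: ex_minnP => k hk hmin; apply/eqP; rewrite eqn_leq; apply/andP; split.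
    by apply: hmin; apply: word_exists.
  case/existsP: hk => t /eqP ht; have := Lb_word t; rewrite ht size_tuple Lb_pos; lia.
by exfalso; apply: H; exists `|Lb w|%N; apply: word_exists.
Qed.

Lemma sapply_pos w j : sapply w (Posz j) = nth 0 w j.-1.
Proof. by rewrite /sapply le0z_nat. Qed.

Lemma f12 u v : 0 < u -> 0 < v -> ~~ ((u == 1) && (v == 2)) -> ~~ ((u == 2) && (v == 1)) ->
  (gf 1 u < gf 1 v) = (u < v).
Proof. case: u => // a; case: v => // b; rewrite /= /G /=; brute. Qed.

Lemma delB_up m w : PS m w -> (2 <= m)%N -> (index (Posz 1) w < index (Posz 2) w)%N ->
  delB m (map (gf 1) w) = (delB m w).+1.
Proof.
move=> hP hm hpq.
have hu := PS_uniq hP.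
have hsz : size w = m by case/and3P: hP => _ _ /eqP.
have in1 : Posz 1 \in w by apply: PS_mem hP _; lia.
have in2 : Posz 2 \in w by apply: PS_mem hP _; lia.
set p := index (Posz 1) w in hpq *; set q := index (Posz 2) w in hpq *.
have qm : (q < m)%N by rewrite -hsz index_mem.
have e1 : forall a, (a < m)%N -> (nth 0 w a == 1) = (a == p).
  move=> a am; apply/eqP/eqP => [h|->]; last by rewrite nth_index.
  rewrite /p; have -> : Posz 1 = nth 0 w a by rewrite h.
  by rewrite index_uniq // hsz.
have e2 : forall a, (a < m)%N -> (nth 0 w a == 2) = (a == q).
  move=> a am; apply/eqP/eqP => [h|->]; last by rewrite nth_index.
  rewrite /q; have -> : Posz 2 = nth 0 w a by rewrite h.
  by rewrite index_uniq // hsz.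
have pos : forall a, (a < m)%N -> 0 < nth 0 w a.
  move=> a am; case/and3P: hP => _ /allP h _; apply: h; apply: mem_nth; by rewrite hsz.
have key : {in iota 2 m.-1, (fun j => all (fun i => sapply (map (gf 1) w) j%:Z < sapply (map (gf 1) w) i%:Z) (iota 1 j.-1))
   =1 (fun j => all (fun i => sapply w j%:Z < sapply w i%:Z) (iota 1 j.-1) || (j == q.+1))}.
  move=> j; rewrite mem_iota => hj /=.
  have hjm : (j.-1 < m)%N by lia.
  rewrite !sapply_pos (nth_map 0) ?hsz //.
  case: (j =P q.+1) => [->|hjq] /=; rewrite ?orbT ?orbF.
    apply/allP => i; rewrite mem_iota => hi; rewrite sapply_pos (nth_map 0) ?hsz; last by lia.
    have hq : nth 0 w q = 2 by apply/eqP; rewrite e2.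
    rewrite /= hq /= /G /=.
    have hb := pos i.-1 (_ : i.-1 < m)%N.
    have hb2 : (nth 0 w i.-1 == 2) = false by rewrite e2; lia.
    move: hb hb2; case: (nth 0 w i.-1) => // n; rewrite /= /G /=; brute.
  apply: eq_in_all => i; rewrite mem_iota => hi; rewrite !sapply_pos (nth_map 0) ?hsz; last by lia.
  apply: f12; try apply: pos; try lia.
  - by rewrite e1 ?e2; lia.
  - by rewrite e2 ?e1; lia.
have Pq : all (fun i => sapply w (q.+1)%:Z < sapply w i%:Z) (iota 1 q.+1.-1) = false.
  apply/negP => /allP /(_ p.+1); rewrite mem_iota !sapply_pos /=.
  have -> : nth 0 w q = 2 by apply/eqP; rewrite e2.
  have -> : nth 0 w p = 1 by apply/eqP; rewrite e1 //; lia.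
  move=> h; have := h (_ : _); lia.
rewrite /delB (eq_in_count key).
have := count_predUI (fun j => all (fun i => sapply w j%:Z < sapply w i%:Z) (iota 1 j.-1)) (pred1 q.+1) (iota 2 m.-1).
have -> : count (predI (fun j => all (fun i => sapply w j%:Z < sapply w i%:Z) (iota 1 j.-1)) (pred1 q.+1)) (iota 2 m.-1) = 0%N.
  apply/eqP; rewrite -leqn0 leqNgt -has_count; apply/hasP => -[j _ /andP[h /eqP e]].
  by subst j; rewrite Pq in h.
have -> : count (pred1 q.+1) (iota 2 m.-1) = 1%N.
  by rewrite count_uniq_mem ?iota_uniq // mem_iota; lia.
rewrite addn0 addn1 => <-; apply: eq_count => j //.
Qed.
End H.

Lemma inS_PS m w : inS m w -> PS m w.
Proof.
case/andP => /andP[/eqP hs hp] hpos; apply/and3P; split => //; last by rewrite hs.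
apply/andP; split; last by rewrite (perm_uniq hp) iota_uniq.
apply/allP => x xw; have := map_f absz xw; rewrite (perm_mem hp) mem_iota /rng; lia.
Qed.

Lemma main_lt m w : PS m w -> (2 <= m)%N -> (index (Posz 1) w < index (Posz 2) w)%N ->
  lengthL m w = lengthL m (map (gf 1) w).
Proof.
move=> hP hm hi.
have hk : (1 <= 1 < m)%N by lia.
rewrite /lengthL !lengthB_PS //; last exact: PS_gen.
rewrite (Lb_up hP hk hi) (delB_up hP hm hi).
have := Lb_pos w; move: (Lb w) => L ->.
rewrite -[(_ + 1)%R]/(Posz (_ + 1)%N) absz_nat; lia.
Qed.

Theorem lemma3p4 (n : nat) (rho : window) :
  (1 <= n)%N -> inS n.+1 rho ->
  lengthL n.+1 rho = lengthL n.+1 (smul (sgen n.+1 1) rho).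
Proof.
move=> hn hS; have hP := inS_PS hS.
have hm : (2 <= n.+1)%N by lia.
rewrite smul_gen; last by case/and3P: hP => /andP[].
have in1 : Posz 1 \in rho by apply: PS_mem hP _; lia.
have in2 : Posz 2 \in rho by apply: PS_mem hP _; lia.
case: (ltngtP (index (Posz 1) rho) (index (Posz 2) rho)) => h.
- exact: main_lt.
- have hk : (1 <= 1 < n.+1)%N by lia.
  have hP' := PS_gen hP hk.
  have inj : injective (gf 1) by apply: (can_inj (gf_inv 1)).
  have h' : (index (Posz 1) (map (gf 1) rho) < index (Posz 2) (map (gf 1) rho))%N.
    have := index_map inj rho (Posz 2); rewrite [gf 1 (Posz 2)]/= /G /= => ->.
    by have := index_map inj rho (Posz 1); rewrite [gf 1 (Posz 1)]/= /G /= => ->.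
  have := main_lt hP' hm h'.
  have e : map (gf 1) (map (gf 1) rho) = rho.
    by rewrite -map_comp (eq_map (g := id)) ?map_id //; exact: gf_inv.
  by rewrite e => ->.
- have : nth (0:int) rho (index (Posz 1) rho) = nth (0:int) rho (index (Posz 2) rho) by rewrite h.
  by rewrite !nth_index.
Qed.
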